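(* Let $K=\{u\in L_1[0,1]: 0\le u\le 1 \text{ a.e.}\}$ with the norm $\|\cdot\|_1$, and define $T\colon K\to K$ a.e. on $[0,1]$ by $Tu(t)=\frac12u(t)\int_0^tu(s)\,ds$. Then $T$ is $\mathfrak{cm}$-nonexpansive: for all $n\in\mathbb{N}$, $v\in K$ and sequences $(u_i)_{i=1}^\infty\subset K$, $$\limsup_{i\to\infty}\sup_{A\subset\{1,\dots,n\}}\Big\|\sum_{k\in A}(Tu_{i+k}-Tv)\Big\|_1\le\limsup_{i\to\infty}\sup_{A\subset\{1,\dots,n\}}\Big\|\sum_{k\in A}(u_{i+k}-v)\Big\|_1.$$ *)

(* Defs.v *)
From HB Require Import structures.
From mathcomp Require Import all_boot all_order all_algebra.
From mathcomp Require Import all_classical all_reals all_analysis.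
Set Implicit Arguments. Unset Strict Implicit. Unset Printing Implicit Defensive.
Import Order.TTheory GRing.Theory Num.Theory.
Local Open Scope classical_set_scope.
Local Open Scope ring_scope.

(* Elements of L_1[0,1] are represented by functions R -> R; everything
   (membership, norm) only looks at their values on [0,1] up to null sets. *)

Definition I01 (R : realType) : set R := [set t : R | 0 <= t <= 1].

Definition inK (R : realType) (u : R -> R) : Prop :=
  measurable_fun (@I01 R) u /\
  (lebesgue_measure : set R -> \bar R).-integrable (@I01 R) (EFin \o u) /\
  {ae (lebesgue_measure : set R -> \bar R),
     forall t, t \in @I01 R -> (0 <= u t <= 1)%R}.

Definition L1norm (R : realType) (f : R -> R) : \bar R :=
  (\int[(lebesgue_measure : set R -> \bar R)]_(t in (@I01 R)) (`|f t|)%:E)%E.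

Definition Top (R : realType) (u : R -> R) : R -> R :=
  fun t => 2^-1 * u t *
    fine (\int[(lebesgue_measure : set R -> \bar R)]_(s in ([set s : R | (0 <= s <= t)%R])%classic) (u s)%:E)%E.

(* sup_{A subset {1..n}} || sum_{k in A} (f (i+k) - g) ||_1, with k = j.+1, j : 'I_n *)
Definition supA (R : realType) (n : nat) (f : nat -> R -> R) (g : R -> R) (i : nat)
  : \bar R :=
  (\big[Order.max/0%E]_(A : {set 'I_n})
     L1norm (fun t => \sum_(j in A) (f (i + j.+1)%N t - g t))%R)%E.

(* Main.v *)
Require Import Defs.
From HB Require Import structures.
From mathcomp Require Import all_boot all_order all_algebra.
From mathcomp Require Import all_classical all_reals all_analysis.
From mathcomp Require Import ring lra measurable_realfun.
Import Order.TTheory GRing.Theory Num.Theory.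
Local Open Scope classical_set_scope.
Local Open Scope ring_scope.

Lemma limn_esup_mono (R : realType) (f g : nat -> \bar R) :
  (forall i, (f i <= g i)%E) -> (limn_esup f <= limn_esup g)%E.
Proof.
move=> fg; rewrite /limn_esup !limf_esupE.
apply: le_ereal_inf_tmp => _ [V FV <-].
apply: ge_ereal_inf; exists (ereal_sup (f @` V)); first by exists V.
apply: ge_ereal_sup => _ [x Vx <-].
apply: le_trans (fg x) _.
by apply: ereal_sup_ubound; exists x.
Qed.

Lemma comb_bound {R : realType} {n : nat} (A : {set 'I_n}) (a c : 'I_n -> R) :
  (forall k, k \in A -> 0 <= a k <= 1) ->
  exists B : {set 'I_n}, `|\sum_(k in A) a k * c k| <= `|\sum_(k in B) c k|.
Proof.
move=> a01.
have [s0|s0] := leP 0 (\sum_(k in A) a k * c k).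
  exists [set k in A | 0 <= c k]; rewrite ger0_norm //.
  apply: le_trans (ler_norm _).
  rewrite (bigID (fun k => 0 <= c k)) /=.
  apply: le_trans (_ : \sum_(k in A | 0 <= c k) a k * c k + 0 <= _).
    apply: lerD => //; apply: sumr_le0 => k /andP[kA ck].
    have /andP[a0 _] := a01 k kA.
    by rewrite mulr_ge0_le0 // ltW // ltNge.
  rewrite addr0 [X in X <= _]big_mkcond [X in _ <= X]big_mkcond /=.
  apply: ler_sum => k _; rewrite inE; case kA: (k \in A) => //=; case: ifP => // ck.
  have /andP[_ a1] := a01 k kA.
  by rewrite ler_piMl.
exists [set k in A | c k <= 0]; rewrite ltr0_norm //.
rewrite ler0_norm; last by apply: sumr_le0 => k; rewrite inE => /andP[].
rewrite lerN2.
rewrite [X in _ <= X](bigID (fun k => c k <= 0)) /=.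
rewrite -[X in X <= _]addr0; apply: lerD; last first.
  apply: sumr_ge0 => k /andP[kA ck].
  have /andP[a0 _] := a01 k kA.
  by rewrite mulr_ge0 // ltW // ltNge.
rewrite [X in X <= _]big_mkcond [X in _ <= X]big_mkcond /=.
apply: ler_sum => k _; rewrite inE; case kA: (k \in A) => //=; case: ifP => // ck.
have /andP[a0 a1] := a01 k kA.
by rewrite -lerN2 -!mulrN ler_piMl // oppr_ge0.
Qed.

Definition leb (R : realType) : set R -> \bar R := @lebesgue_measure R.

Section LebInst.
Context {R : realType}.
Let leb0 : leb R set0 = 0%E.
Proof. exact: (@measure0 _ _ _ (@lebesgue_measure R)). Qed.
Let leb_ge0 : forall x, (0 <= leb R x)%E.
Proof. move=> x; exact: (@measure_ge0 _ _ _ (@lebesgue_measure R)). Qed.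
Let leb_ssa : semi_sigma_additive (leb R).
Proof. exact: (@measure_semi_sigma_additive _ _ _ (@lebesgue_measure R)). Qed.
HB.instance Definition _ := isMeasure.Build _ R R (leb R) leb0 leb_ge0 leb_ssa.
End LebInst.

Section Ana.
Context {R : realType}.
Notation mu := (leb R).
Notation I := (@I01 R).

Lemma lebE : (lebesgue_measure : set R -> \bar R) = leb R.
Proof. by []. Qed.

Definition J (t : R) : set R := [set s : R | 0 <= s <= t].
Definition Int (t : R) (f : R -> R) : R := \int[mu]_(s in J t) f s.

Lemma I01E : I = `[0, 1]%classic.
Proof. by rewrite set_itvcc. Qed.

Lemma JE t : J t = `[0, t]%classic.
Proof. by rewrite set_itvcc. Qed.

Lemma mI : measurable I.
Proof. by rewrite I01E. Qed.

Lemma mJ t : measurable (J t).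
Proof. by rewrite JE. Qed.

Lemma muI : mu I = 1%E.
Proof. by rewrite /leb I01E lebesgue_measure_itv /= lte_fin ltr01 /= oppr0 adde0. Qed.

Lemma muIE (m : {measure set R -> \bar R}) : (m : set R -> \bar R) = leb R -> m I = 1%E.
Proof. by move=> ->; exact: muI. Qed.

Lemma JI {t} : t <= 1 -> J t `<=` I.
Proof. by move=> t1 s /andP[s0 st]; apply/andP; split => //; apply: le_trans t1. Qed.

Lemma TopE (f : R -> R) t : Top f t = 2^-1 * f t * Int t f.
Proof. reflexivity. Qed.

Lemma L1normE (f : R -> R) : L1norm f = (\int[mu]_(t in I) (`|f t|)%:E)%E.
Proof. reflexivity. Qed.

Lemma inKE {f : R -> R} : inK f ->
  [/\ measurable_fun I f, mu.-integrable I (EFin \o f) &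
      {ae mu, forall t, t \in I -> 0 <= f t <= 1}].
Proof. by rewrite /inK lebE => -[? [? ?]]. Qed.

Lemma intJ {f : R -> R} {t} : t <= 1 ->
  mu.-integrable I (EFin \o f) -> mu.-integrable (J t) (EFin \o f).
Proof. by move=> t1; apply: integrableS; [exact: mI|exact: mJ|exact: JI]. Qed.

Lemma meas_Int (f : R -> R) : mu.-integrable I (EFin \o f) ->
  measurable_fun I (fun t => Int t f).
Proof.
move=> fi.
pose F := (EFin \o f).
pose P (t : R) := fine (\int[mu]_(s in J (Order.min t 1%R)) funepos F s)%E.
pose N (t : R) := fine (\int[mu]_(s in J (Order.min t 1%R)) funeneg F s)%E.
have m1 (t : R) : Order.min t 1 <= 1 by rewrite ge_min lexx orbT.
have ndP : forall (G : R -> \bar R), mu.-integrable I G -> (forall x, 0 <= G x)%E ->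
    nondecreasing_fun (fun t => fine (\int[mu]_(s in J (Order.min t 1%R)) G s)%E).
  move=> G Gi G0 s t st.
  have Gs := integrableS mI (mJ _) (JI (m1 s)) Gi.
  have Gt := integrableS mI (mJ _) (JI (m1 t)) Gi.
  apply: fine_le; [exact: (integrable_fin_num (mJ _) Gs)|exact: (integrable_fin_num (mJ _) Gt)|].
  apply: ge0_subset_integral => //; [exact: mJ|exact: mJ| |].
    by case/integrableP: Gt.
  move=> x /andP[x0 xs]; apply/andP; split => //; apply: le_trans xs _.
  by apply: le_min2.
have mP : measurable_fun I P.
  apply: nondecreasing_measurable; first exact: mI.
  apply: ndP => [|x]; [exact: (integrable_funepos mI fi)|exact: funepos_ge0].
have mN : measurable_fun I N.
  apply: nondecreasing_measurable; first exact: mI.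
  apply: ndP => [|x]; [exact: (integrable_funeneg mI fi)|exact: funeneg_ge0].
apply: (@eq_measurable_fun _ _ _ _ _ (P \- N)); last exact: measurable_funB.
move=> t; rewrite inE => /andP[t0 t1].
rewrite /Int /Rintegral [in RHS]integralE fineB; first last.
- exact: (integrable_fin_num (mJ _) (integrable_funeneg (mJ _) (intJ t1 fi))).
- exact: (integrable_fin_num (mJ _) (integrable_funepos (mJ _) (intJ t1 fi))).
have mt : Order.min t 1 = t by apply/min_idPl.
by rewrite /= /P /N mt.
Qed.

Lemma meas_Top (f : R -> R) : inK f -> measurable_fun I (Top f).
Proof.
move=> /inKE[mf fi _].
have -> : Top f = (fun t => 2^-1 * f t * Int t f) by apply/funext => t; rewrite TopE.
apply: measurable_funM; last exact: meas_Int.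
by apply: measurable_funM => //; exact: measurable_cst.
Qed.

Lemma Int_le {g : R -> R} {t} : t <= 1 -> mu.-integrable I (EFin \o g) ->
  ((`|Int t g|)%:E <= \int[mu]_(x in I) (`|g x|)%:E)%E.
Proof.
move=> t1 gi.
have gJ := intJ t1 gi.
rewrite /Int EFin_normr_Rintegral //; last exact: mJ.
have mg : measurable_fun I (EFin \o g) by case/integrableP: gi.
have mgJ : measurable_fun (J t) (EFin \o g).
  by apply: measurable_funS mg; [exact: mI|exact: JI].
apply: le_trans; first exact: (le_abse_integral mu (mJ t) mgJ).
apply: ge0_subset_integral => //; [exact: mJ|exact: mI| |exact: JI].
exact: measurableT_comp.
Qed.

Lemma int_sum (D : set R) (mD : measurable D) (T : Type) (s : seq T) (P : pred T)
  (g : T -> R -> R) :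
  (forall j, mu.-integrable D (EFin \o g j)) ->
  mu.-integrable D (EFin \o (fun x => \sum_(j <- s | P j) g j x)) /\
  \int[mu]_(x in D) (\sum_(j <- s | P j) g j x) = \sum_(j <- s | P j) \int[mu]_(x in D) g j x.
Proof.
move=> gi; elim: s => [|a s [ih1 ih2]].
  have -> : (fun x => \sum_(j <- [::] | P j) g j x) = (fun=> 0).
    by apply/funext => x; rewrite big_nil.
  rewrite big_nil; split; first exact: integrable0.
  by rewrite Rintegral_cst // mul0r.
rewrite big_cons; case: ifP => Pa; last first.
  have -> : (fun x => \sum_(j <- a :: s | P j) g j x) = (fun x => \sum_(j <- s | P j) g j x).
    by apply/funext => x; rewrite big_cons Pa.
  by split.
have -> : (fun x => \sum_(j <- a :: s | P j) g j x) = (fun x => g a x + \sum_(j <- s | P j) g j x).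
  by apply/funext => x; rewrite big_cons Pa.
split; last by rewrite RintegralD // ih2.
apply: (eq_integrable _ ((EFin \o g a) \+ (EFin \o (fun x => \sum_(j <- s | P j) g j x)))) => //.
exact: integrableD.
Qed.

Lemma Int_bound (f : R -> R) t : t <= 1 -> inK f -> `|Int t f| <= 1.
Proof.
move=> t1 /inKE[mf fi aef].
rewrite -lee_fin; apply: le_trans (Int_le t1 fi) _.
have mF : measurable_fun I (EFin \o f) by apply/measurable_EFinP.
have aeF : {ae mu, forall x, I x -> (`|(EFin \o f) x| <= 1%:E)%E}.
  apply: filterS aef => x h Ix; have /andP[a b] := h (mem_set Ix).
  by rewrite /= lee_fin ger0_norm.
have := integral_le_bound (mu := mu) (D := I) (f := EFin \o f) 1%:E mI mF lee01 aeF.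
have muI1 : (mu I <= 1)%E by rewrite muI.
move=> h; apply: le_trans h _; rewrite mul1e; exact: muI1.
Qed.

Lemma meas_sum_in (n : nat) (A : {set 'I_n}) (F : 'I_n -> R -> R) :
  (forall j, measurable_fun I (F j)) ->
  measurable_fun I (fun t => \sum_(j in A) F j t).
Proof.
move=> mF.
have -> : (fun t => \sum_(j in A) F j t) =
    (fun t => \sum_(j <- index_enum 'I_n) (if j \in A then F j t else 0)).
  by apply/funext => t; rewrite big_mkcond.
apply: measurable_sum => j; case: (j \in A) => //.
Qed.

Lemma key_i (n : nat) (v : R -> R) (u : nat -> R -> R) (i : nat) :
  inK v -> (forall i, inK (u i)) ->
  (supA n (fun i => Top (u i)) (Top v) i <= supA n u v i)%E.
Proof.
move=> hv hu.
set M := supA n u v i.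
pose w (j : 'I_n) := u (i + j.+1)%N.
pose S (B : {set 'I_n}) := fun t => \sum_(j in B) (w j t - v t).
have hM : forall B, (L1norm (S B) <= M)%E.
  move=> B; rewrite /M /supA; exact: le_bigmax.
have M0 : (0 <= M)%E.
  have := hM (finset.set0 : {set _}); apply: le_trans.
  rewrite L1normE; apply: integral_ge0 => x _.
  by rewrite lee_fin normr_ge0.
have [mv iv aev] := inKE hv.
have hw j := inKE (hu (i + j.+1)%N).
have iw : forall j, mu.-integrable I (EFin \o w j) by move=> j; case: (hw j).
have iwv : forall j, mu.-integrable I (EFin \o (fun x => w j x - v x)).
  move=> j; apply: (eq_integrable _ ((EFin \o w j) \- (EFin \o v))%E) => //.
    exact: mI.
  exact: (integrableB mI (iw j) iv).
have iS : forall B, mu.-integrable I (EFin \o S B).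
  move=> B; have [h _] := int_sum _ mI _ (index_enum _) (fun j => j \in B) (fun j x => w j x - v x) iwv. exact: h.
have mS : forall B, measurable_fun I (S B).
  by move=> B; apply/measurable_EFinP; case/integrableP: (iS B).
have aew : {ae mu, forall t, forall j : 'I_n, t \in I -> 0 <= w j t <= 1}.
  have := @filter_forall _ _ (fun j t => t \in I -> 0 <= w j t <= 1) (almost_everywhere mu) _.
  apply => j; by case: (hw j).
have ae_all : {ae mu, forall t, t \in I -> (0 <= v t <= 1) /\ forall j, 0 <= w j t <= 1}.
  apply: filterS2 aev aew => t hvt hwt tI; split; [exact: hvt|move=> j; exact: hwt j tI].
rewrite /supA; apply: bigmax_le => // A _.
have pw : {ae mu, forall t, I t -> ((`|\sum_(j in A) (Top (w j) t - Top v t)|)%:E <=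
    (2^-1 * `|S A t|)%:E + (2^-1)%:E * M)%E}.
  apply: filterS ae_all => t H It.
  have [hvt hwt] := H (mem_set It).
  have t1 : t <= 1 by case/andP: It.
  set V := Int t v.
  have V1 : `|V| <= 1 by exact: Int_bound.
  have decomp : \sum_(j in A) (Top (w j) t - Top v t) =
      2^-1 * (V * S A t + \sum_(j in A) w j t * (Int t (w j) - V)).
    rewrite /S mulr_sumr -big_split mulr_sumr; apply: eq_bigr => j _.
    by rewrite !TopE /V /=; ring.
  have [B hB] := comb_bound A (fun j => w j t) (fun j => Int t (w j) - V) (fun j _ => hwt j).
  have SB : \sum_(j in B) (Int t (w j) - V) = Int t (S B).
    rewrite /Int /S (int_sum _ (mJ t) _ (index_enum _) (fun j => j \in B)
        (fun j x => w j x - v x) (fun j => intJ t1 (iwv j))).2.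
    apply: eq_bigr => j _; rewrite RintegralB //; [exact: mJ|exact: intJ t1 (iw j)|exact: intJ t1 iv].
  have XB : ((`|Int t (S B)|)%:E <= M)%E.
    by apply: le_trans (hM B); exact: (Int_le t1 (iS B)).
  have hr : `|2^-1 * (V * S A t + \sum_(j in A) w j t * (Int t (w j) - V))| <=
      2^-1 * `|S A t| + 2^-1 * `|Int t (S B)|.
    rewrite normrM (ger0_norm (_ : 0 <= 2^-1)) ?invr_ge0 ?ler0n // -mulrDr.
    rewrite ler_wpM2l ?invr_ge0 ?ler0n //.
    apply: le_trans (ler_normD _ _) _; apply: lerD; last by rewrite -SB.
    by rewrite normrM ler_piMl.
  rewrite decomp; apply: (@le_trans _ _ ((2^-1 * `|S A t| + 2^-1 * `|Int t (S B)|)%:E)).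
    by rewrite lee_fin.
  have h2 : (0 <= (2^-1 : R)%:E)%E by rewrite lee_fin invr_ge0 ler0n.
  rewrite EFinD EFinM; apply: leeD2l; exact: (lee_wpmul2l h2 XB).
rewrite L1normE.
have h2 : (0 <= (2^-1 : R)%:E)%E by rewrite lee_fin invr_ge0 ler0n.
have mT : forall j, measurable_fun I (fun t => Top (w j) t - Top v t).
  by move=> j; apply: measurable_funB; [exact: meas_Top (hu _)|exact: meas_Top hv].
have mL : measurable_fun I (fun t => (`|\sum_(j in A) (Top (w j) t - Top v t)|)%:E).
  apply/measurable_EFinP; apply: measurableT_comp; first exact: normr_measurable.
  exact: meas_sum_in.
have mSA : measurable_fun I (fun t => `|S A t|).
  by apply: measurableT_comp; [exact: normr_measurable|exact: mS].
have mRa : measurable_fun I (fun t => (2^-1 * `|S A t|)%:E).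
  by apply/measurable_EFinP; apply: measurable_funM => //; exact: measurable_cst.
have hMM : (0 <= (2^-1)%:E * M)%E by apply: mule_ge0.
apply: (@le_trans _ _ (\int[mu]_(t in I) ((2^-1 * `|S A t|)%:E + (2^-1)%:E * M))%E).
  have f10 : forall t, I t -> (0 <= (`|\sum_(j in A) (Top (w j) t - Top v t)|)%:E)%E.
    by move=> t _; rewrite lee_fin normr_ge0.
  have f20 : forall t, I t -> (0 <= (2^-1 * `|S A t|)%:E + (2^-1)%:E * M)%E.
    by move=> t _; apply: adde_ge0 => //; rewrite lee_fin mulr_ge0 ?invr_ge0 ?ler0n.
  have mf2 : measurable_fun I (fun t => (2^-1 * `|S A t|)%:E + (2^-1)%:E * M)%E.
    by apply: emeasurable_funD => //; exact: measurable_cst.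
  exact: (ae_ge0_le_integral mI f10 mL f20 mf2 pw).
rewrite ge0_integralD //.
rewrite integral_cst; last exact: mI.
rewrite muIE // mule1.
under eq_integral do rewrite EFinM.
rewrite ge0_integralZl_EFin //.
apply: (@le_trans _ _ ((2^-1)%:E * M + (2^-1)%:E * M)%E).
  apply: leeD2r; exact: (lee_wpmul2l h2 (hM A)).
rewrite -ge0_muleDl ?lee_fin ?invr_ge0 ?ler0n // -EFinD.
have -> : (2^-1 + 2^-1 : R) = 1 by rewrite [RHS](splitr 1) mul1r.
  by rewrite mul1e.
all: first [exact: mI | by apply/measurable_EFinP].
Qed.


End Ana.

Theorem proposition6p2 (R : realType) (n : nat) (v : R -> R) (u : nat -> R -> R) :
  inK v -> (forall i, inK (u i)) ->
  (limn_esup (supA n (fun i => Top (u i)) (Top v))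
   <= limn_esup (supA n u v))%E.
Proof.
move=> hv hu; apply: limn_esup_mono => i; exact: key_i.
Qed.
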